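(* Let $(X,<)$ be a linearly ordered set and define relations on $\beta X$ by $u\trianglelefteq v\iff (u\,\tilde\le\,v\ \vee\ v\,\tilde\ge\,u)$ and $u\equiv v\iff(u\trianglelefteq v\wedge v\trianglelefteq u)$. Then for all $u,v\in\beta X$, $$u\trianglelefteq v\iff\mathrm{supp}(u)\le\mathrm{supp}(v),\qquad u\equiv v\iff\mathrm{supp}(u)=\mathrm{supp}(v).$$ Hence $\trianglelefteq$ is a linear pre-order on $\beta X$, $\equiv$ is an equivalence relation, and the quotient $\beta X/\!\equiv$ with the induced linear order is isomorphic (via $[u]\mapsto\mathrm{supp}(u)$) to the set $s(X)$ of supports of ultrafilters over $X$ with its natural order.
   Context: $\beta X$ is the set of ultrafilters over $X$; $\tilde x=\{S\subseteq X:x\in S\}$. For a binary relation $R$ on $X$, $u\,\tilde R\,v\iff\{x\in X:\{y\in X:x\,R\,y\}\in v\}\in u$. $I_u=\bigcap\{I\in u: I\text{ initial segment of }X\}$, $J_u=\bigcap\{J\in u: J\text{ final segment of }X\}$; for non-principal $u$ exactly one of $I_u\in u$, $J_u\in u$ holds. Supports: $\mathrm{supp}(\tilde x)=\{x\}$; for non-principal $u$, $\mathrm{supp}(u)$ is $I_u$ regarded as a left half-cut if $I_u\in u$, and $J_u$ regarded as a right half-cut if $J_u\in u$; supports are equal iff of the same kind and equal as sets. $s(X)$ is the set of all such supports (all points $\{x\}$, all nonempty initial segments without greatest element as left half-cuts, all nonempty final segments without least element as right half-cuts). Natural linear order on $s(X)$: $\{x\}<\{y\}$ iff $x<y$; $\{x\}<I$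 iff $x\in I$, $I<\{x\}$ iff $x\notin I$; $\{x\}<J$ iff $x\notin J$, $J<\{x\}$ iff $x\in J$; $I<I'$ iff $I\subsetneq I'$; $J<J'$ iff $J\supsetneq J'$; $I<J$ iff $I\cap J=\emptyset$, $J<I$ iff $I\cap J\ne\emptyset$; $\le$ is its reflexive version. *)

(* Defs.v *)
From HB Require Import structures.
From mathcomp Require Import all_boot all_order.
Set Implicit Arguments. Unset Strict Implicit. Unset Printing Implicit Defensive.
Import Order.TTheory.
Local Open Scope order_scope.
Local Unset Asymmetric Patterns.

Section UF.
Context {d : Order.disp_t} {X : orderType d}.

Definition subsetX (A B : X -> Prop) : Prop := forall x, A x -> B x.
Definition seteq (A B : X -> Prop) : Prop := forall x, A x <-> B x.

Definition is_ultrafilter (u : (X -> Prop) -> Prop) : Prop :=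
  u (fun _ => True) /\
  ~ u (fun _ => False) /\
  (forall A B, u A -> subsetX A B -> u B) /\
  (forall A B, u A -> u B -> u (fun x => A x /\ B x)) /\
  (forall A, u A \/ u (fun x => ~ A x)).

Definition principal (x : X) : (X -> Prop) -> Prop := fun S => S x.

Definition lift_rel (R : X -> X -> Prop) (u v : (X -> Prop) -> Prop) : Prop :=
  u (fun x => v (fun y => R x y)).

Definition le_rel : X -> X -> Prop := fun x y => x <= y.
Definition ge_rel : X -> X -> Prop := fun x y => y <= x.

Definition trle (u v : (X -> Prop) -> Prop) : Prop :=
  lift_rel le_rel u v \/ lift_rel ge_rel v u.
Definition treq (u v : (X -> Prop) -> Prop) : Prop := trle u v /\ trle v u.

Definition initial_seg (K : X -> Prop) : Prop := forall x y, y <= x -> K x -> K y.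
Definition final_seg (J : X -> Prop) : Prop := forall x y, x <= y -> J x -> J y.

Definition Iu (u : (X -> Prop) -> Prop) : X -> Prop :=
  fun x => forall K, initial_seg K -> u K -> K x.
Definition Ju (u : (X -> Prop) -> Prop) : X -> Prop :=
  fun x => forall J, final_seg J -> u J -> J x.

Definition is_principal (u : (X -> Prop) -> Prop) : Prop :=
  exists x, forall S, u S <-> principal x S.

(* supports: a point, a left half-cut (initial segment), a right half-cut (final segment) *)
Inductive usupport : Type :=
  | SPt : X -> usupport
  | SLeft : (X -> Prop) -> usupport
  | SRight : (X -> Prop) -> usupport.

Definition supp_eq (s t : usupport) : Prop :=
  match s, t with
  | SPt x, SPt y => x = y
  | SLeft K, SLeft K' => seteq K K'
  | SRight J, SRight J' => seteq J J'
  | _, _ => False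
  end.

Definition is_supp (u : (X -> Prop) -> Prop) (s : usupport) : Prop :=
  match s with
  | SPt x => forall S, u S <-> principal x S
  | SLeft K => ~ is_principal u /\ u (Iu u) /\ seteq K (Iu u)
  | SRight J => ~ is_principal u /\ u (Ju u) /\ seteq J (Ju u)
  end.

Definition in_sX (s : usupport) : Prop :=
  match s with
  | SPt _ => True
  | SLeft K => initial_seg K /\ (exists x, K x) /\ (forall x, K x -> exists y, K y /\ x < y)
  | SRight J => final_seg J /\ (exists x, J x) /\ (forall x, J x -> exists y, J y /\ y < x)
  end.

Definition psubset (A B : X -> Prop) : Prop := subsetX A B /\ ~ subsetX B A.

Definition supp_lt (s t : usupport) : Prop :=
  match s, t with
  | SPt x, SPt y => x < y
  | SPt x, SLeft K => K x
  | SLeft K, SPt x => ~ K x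
  | SPt x, SRight J => ~ J x
  | SRight J, SPt x => J x
  | SLeft K, SLeft K' => psubset K K'
  | SRight J, SRight J' => psubset J' J
  | SLeft K, SRight J => forall x, ~ (K x /\ J x)
  | SRight J, SLeft K => exists x, K x /\ J x
  end.

Definition supp_le (s t : usupport) : Prop := supp_lt s t \/ supp_eq s t.

End UF.

(* Main.v *)
Require Import Defs.
From mathcomp Require Import all_boot all_order.
From mathcomp Require classical_sets filter.
From Stdlib Require Import Classical ClassicalEpsilon.
Set Implicit Arguments. Unset Strict Implicit.
Import Order.TTheory.
Local Open Scope order_scope.

Section Gen.
Context {d : Order.disp_t} {X : orderType d}.
Implicit Types (u v w : (X -> Prop) -> Prop).

Lemma get_uf (F : (X->Prop)->Prop) : F (fun _ => True) -> ~F (fun _ => False) ->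
  (forall A B, F A -> (forall x, A x -> B x) -> F B) ->
  (forall A B, F A -> F B -> F (fun x => A x /\ B x)) ->
  exists u, is_ultrafilter u /\ (forall A, F A -> u A).
Proof.
move=> FT FF Fm FI.
have PF : filter.ProperFilter F.
  constructor; first exact: FF.
  constructor; first exact: FT.
    by move=> A B; apply: FI.
  by move=> P Q PQ FP; apply: Fm FP PQ.
have [G [UG sub]] := filter.ultraFilterLemma PF.
exists G; split; last by move=> A; apply: sub.
split; first exact: (@filter.filterT _ G _).
split; first exact: (@filter.filter_not_empty _ G _).
split; first by move=> A B GA AB; apply: (@filter.filterS _ G _ A B AB GA).
split; first by move=> A B GA GB; apply: (@filter.filterI _ G _ A B GA GB).
by move=> A; apply: (filter.in_ultra_setVsetC A UG).
Qed.

Lemma nlt_le (x y : X) : ~ (x < y) -> y <= x.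
Proof. by move=> h; rewrite leNgt; apply/negP. Qed.
Lemma nle_lt (x y : X) : ~ (x <= y) -> y < x.
Proof. by move=> h; rewrite ltNge; apply/negP. Qed.

Section UFL.
Variable u : (X -> Prop) -> Prop.
Hypothesis Hu : is_ultrafilter u.
Lemma uT : u (fun _ => True). Proof. by case: Hu. Qed.
Lemma uF : ~ u (fun _ => False). Proof. by case: Hu => _ []. Qed.
Lemma um A B : u A -> (forall x, A x -> B x) -> u B.
Proof. by case: Hu => _ [_ [h _]] ha hb; apply: h ha hb. Qed.
Lemma uI A B : u A -> u B -> u (fun x => A x /\ B x).
Proof. by case: Hu => _ [_ [_ [h _]]]; apply: h. Qed.
Lemma uC A : u A \/ u (fun x => ~ A x).
Proof. by case: Hu => _ [_ [_ [_ h]]]; apply: h. Qed.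
Lemma udisj A B : u A -> u B -> (forall x, A x -> B x -> False) -> False.
Proof. move=> ha hb h; apply: uF; apply: um (uI ha hb) _ => x [] /h; done. Qed.
Lemma uneg A : ~ u A -> u (fun x => ~ A x).
Proof. by move=> h; case: (uC A). Qed.
Lemma unegA A : u (fun x => ~ A x) -> ~ u A.
Proof. by move=> h1 h2; apply: udisj h2 h1 _ => x. Qed.
Lemma upt x : u (fun y => y = x) -> is_principal u.
Proof.
move=> h; exists x => S; split => [hS|hS].
  by apply: NNPP => nS; apply: udisj hS h _ => y Sy e; apply: nS; rewrite -e.
by apply: um h _ => y ->.
Qed.
End UFL.

Definition cut u : X -> Prop := fun x => u (fun y => x < y).
Definition cutp u : X -> Prop := fun x => u (fun y => x <= y).
Definition kind u : nat :=
  if excluded_middle_informative (u (cut u)) then 0%N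
  else if excluded_middle_informative (u (cutp u)) then 1%N else 2%N.
Definition lexle (C : X -> Prop) (k : nat) (C' : X -> Prop) (k' : nat) : Prop :=
  (subsetX C C' /\ ~ subsetX C' C) \/ (subsetX C C' /\ subsetX C' C /\ (k <= k')%N).

Lemma kind0 u : kind u = 0%N <-> u (cut u).
Proof. rewrite /kind; do 2 case: excluded_middle_informative => //. Qed.
Lemma kind1 u : kind u = 1%N <-> ~ u (cut u) /\ u (cutp u).
Proof. rewrite /kind; case: (excluded_middle_informative (u (cut u))) => h1;
  case: (excluded_middle_informative (u (cutp u))) => h2 /=; split => //; tauto. Qed.
Lemma kind2 u : kind u = 2%N <-> ~ u (cut u) /\ ~ u (cutp u).
Proof. rewrite /kind; case: (excluded_middle_informative (u (cut u))) => h1;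
  case: (excluded_middle_informative (u (cutp u))) => h2 /=; split => //; tauto. Qed.
Lemma kind_le2 u : (kind u <= 2)%N.
Proof. rewrite /kind; do 2 case: excluded_middle_informative => //. Qed.

Lemma cut_init w (Hw : is_ultrafilter w) : initial_seg (cut w).
Proof. move=> x y yx h; refine (um Hw h _) => z; exact: le_lt_trans. Qed.
Lemma cutp_init w (Hw : is_ultrafilter w) : initial_seg (cutp w).
Proof. move=> x y yx h; refine (um Hw h _) => z; exact: le_trans. Qed.
Lemma cut_sub w (Hw : is_ultrafilter w) : subsetX (cut w) (cutp w).
Proof. move=> x h; refine (um Hw h _) => z; exact: ltW. Qed.
Lemma C1 w (Hw : is_ultrafilter w) : w (cut w) -> subsetX (cutp w) (cut w).
Proof.
move=> hc x hx; apply: NNPP => nx.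
by apply: (udisj Hw hc hx) => y cy xy; apply: nx; exact: (cut_init Hw xy cy).
Qed.
Lemma ext w (Hw : is_ultrafilter w) A B : seteq A B -> w A -> w B.
Proof. by move=> e h; refine (um Hw h _) => x /e. Qed.

Section Two.
Variables u v : (X -> Prop) -> Prop.
Hypotheses (Hu : is_ultrafilter u) (Hv : is_ultrafilter v).

Lemma trle_iff : trle u v <-> u (cutp v) \/ ~ v (cut u).
Proof.
rewrite /trle /lift_rel /le_rel /ge_rel; split; case=> h; [by left| |by left|].
  right => hc; apply: (udisj Hv hc h) => x cx yx.
  by apply: (udisj Hu cx yx) => y xy yx'; move: (lt_le_trans xy yx'); rewrite ltxx.
right; refine (um Hv (uneg Hv h) _) => x nx; refine (um Hu (uneg Hu nx) _) => y; apply: nlt_le.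
Qed.

Lemma lemA : (exists x, cut v x /\ ~ cut u x) -> trle u v.
Proof.
case=> x [vx ux]; apply/trle_iff; right => hc.
apply: (udisj Hv hc vx) => y cy xy; apply: ux; exact: (cut_init Hu (ltW xy) cy).
Qed.

Lemma lemB : (exists x, cut u x /\ ~ cut v x) -> ~ trle u v.
Proof.
case=> x [ux vx] /trle_iff [h|h].
  apply: (udisj Hu h ux) => y cy xy.
  have h2 : v (fun z => z <= x) by refine (um Hv (uneg Hv vx) _) => z; apply: nlt_le.
  by apply: (udisj Hv cy h2) => z yz zx; move: (lt_le_trans xy (le_trans yz zx)); rewrite ltxx.
suff : v (cut u) by [].
refine (um Hv (uneg Hv vx) _) => z0 /nlt_le zx; exact: (cut_init Hu zx ux).
Qed.

Lemma C3 : seteq (cut u) (cut v) -> kind u = 2%N -> kind v = 1%N -> False.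
Proof.
move=> e /kind2 [nuc nucp] /kind1 [nvc vcp].
have [q [qp nq]] : exists q, cutp v q /\ ~ cut v q.
  apply: NNPP => hn; apply: nvc; refine (ext Hv _ vcp) => x; split; last exact: cut_sub.
  by move=> hx; apply: NNPP => nx; apply: hn; exists x.
have u1 : u (fun y => y <= q).
  refine (um Hu (uneg Hu (fun h => nq (proj1 (e q) h))) _) => y; exact: nlt_le.
have u2 := uI Hu u1 (uneg Hu nuc).
have S1 : forall y, y <= q /\ ~ cut u y -> y = q.
  move=> y [yq ny]; apply/eqP; rewrite eq_le yq /=; apply: NNPP => nqy; have yq' := nle_lt nqy.
  have vy : v (fun z => z <= y).
    refine (um Hv (uneg Hv (fun h => ny (proj2 (e y) h))) _) => z; exact: nlt_le.
  apply: (udisj Hv vy qp) => z zy qz.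
  by move: (lt_le_trans yq' (le_trans qz zy)); rewrite ltxx.
have uq : u (fun z => q <= z).
  by refine (um Hu u2 _) => y /S1 ->.
apply: nucp; refine (um Hu u2 _) => y /S1 ->; exact: uq.
Qed.

Lemma lemC : seteq (cut u) (cut v) -> (trle u v <-> (kind u <= kind v)%N).
Proof.
move=> e; rewrite trle_iff.
case: (excluded_middle_informative (v (cut v))) => hv.
  have kv : kind v = 0%N by apply/kind0.
  rewrite kv leqn0; have vcu : v (cut u) by refine (ext Hv _ hv) => x; split => /e.
  have e2 : seteq (cutp v) (cut u).
    move=> x; split => [/(C1 Hv hv) /e //| /e]; exact: cut_sub.
  split; first by case=> // h; apply/eqP/kind0; exact: (ext Hu e2 h).
  by move/eqP/kind0 => h; left; refine (ext Hu _ h) => x; split => /e2.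
have nvu : ~ v (cut u) by move=> h; apply: hv; exact: (ext Hv e h).
split => _; last by right.
have kv0 : kind v <> 0%N by move/kind0.
have := kind_le2 u; have := kind_le2 v.
case kvE: (kind v) => [|[|[|]]] //; case kuE: (kind u) => [|[|[|]]] //.
by move=> _ _; exfalso; apply: C3.
Qed.

Lemma trle_lex : trle u v <-> lexle (cut u) (kind u) (cut v) (kind v).
Proof.
case: (classic (exists x, cut v x /\ ~ cut u x)) => [hA|nA].
  split => _; last exact: lemA hA.
  case: hA => x [vx ux]; left; split; last by move=> h; apply: ux; apply: h.
  move=> y uy; apply: NNPP => vy.
  case: (leP x y) => [xy|yx]; first by apply: ux; exact: (cut_init Hu xy uy).
  by apply: vy; exact: (cut_init Hv (ltW yx) vx).
case: (classic (exists x, cut u x /\ ~ cut v x)) => [hB|nB].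
  split => h; first by exfalso; exact: (lemB hB h).
  exfalso; case: hB => x [ux vx]; apply: vx.
  by case: h => [[h _]|[h _]]; apply: h.
have e : seteq (cut u) (cut v).
  move=> x; split => h; apply: NNPP => nh; [apply: nB|apply: nA]; by exists x.
rewrite (lemC e); split => [h|]; first by right; split; [|split] => // x /e.
by case=> [[_ []]|[_ [_ h]]] //; move=> x /e.
Qed.
End Two.

Lemma lexle_refl C k : lexle C k C k.
Proof. by right; split; [|split] => //. Qed.

Lemma lexle_trans C1 k1 C2 k2 C3 k3 :
  lexle C1 k1 C2 k2 -> lexle C2 k2 C3 k3 -> lexle C1 k1 C3 k3.
Proof.
have tr : forall A B C : X -> Prop, subsetX A B -> subsetX B C -> subsetX A C.
  by move=> A B C h1 h2 x /h1 /h2.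
case=> [[s12 n21]|[s12 [s21 k12]]] [[s23 n32]|[s23 [s32 k23]]].
- left; split; first exact: tr s12 s23.
  by move=> s31; apply: n21; exact: tr s23 s31.
- left; split; first exact: tr s12 s23.
  by move=> s31; apply: n21; exact: tr s23 s31.
- left; split; first exact: tr s12 s23.
  by move=> s31; apply: n32; exact: tr s31 s12.
- right; split; first exact: tr s12 s23.
  split; first exact: tr s32 s21.
  exact: leq_trans k12 k23.
Qed.

Lemma lexle_ext C C1 k C' C1' k' : seteq C C1 -> seteq C' C1' ->
  lexle C k C' k' <-> lexle C1 k C1' k'.
Proof.
move=> e e'.
have H : forall A B A' B' : X -> Prop, seteq A A' -> seteq B B' -> subsetX A B -> subsetX A' B'.
  by move=> A B A' B' ea eb h x /ea /h /eb.
have es : forall A B : X -> Prop, seteq A B -> seteq B A by move=> A B h x; split => /h.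
split; case=> [[h1 h2]|[h1 [h2 h3]]].
- left; split; first exact: H e e' h1.
  by move=> h; apply: h2; exact: H (es _ _ e') (es _ _ e) h.
- right; split; first exact: H e e' h1.
  by split => //; exact: H e' e h2.
- left; split; first exact: H (es _ _ e) (es _ _ e') h1.
  by move=> h; apply: h2; exact: H e' e h.
- right; split; first exact: H (es _ _ e) (es _ _ e') h1.
  by split => //; exact: H (es _ _ e') (es _ _ e) h2.
Qed.

Lemma lexle_anti C k C' k' :
  lexle C k C' k' /\ lexle C' k' C k <-> seteq C C' /\ k = k'.
Proof.
split.
  case=> [[[h1 h2]|[h1 [h2 h3]]] [[h4 h5]|[h4 [h5 h6]]]]; try (exfalso; tauto).
  split; first by move=> x; split; [apply: h1|apply: h2].
  by apply/eqP; rewrite eqn_leq h3 h6.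
case=> e ->; split; right; split.
- by move=> x /e.
- by split => // x /e.
- by move=> x /e.
- by split => // x /e.
Qed.

Lemma trle_total u v : is_ultrafilter u -> is_ultrafilter v -> trle u v \/ trle v u.
Proof.
move=> Hu Hv.
case: (classic (exists x, cut v x /\ ~ cut u x)) => [hA|nA]; first by left; exact: lemA.
case: (classic (exists x, cut u x /\ ~ cut v x)) => [hB|nB]; first by right; exact: lemA.
have e : seteq (cut u) (cut v).
  move=> x; split => h; apply: NNPP => nh; [apply: nB|apply: nA]; by exists x.
case: (leqP (kind u) (kind v)) => h; first by left; apply/(lemC Hu Hv e).
right; apply/(lemC Hv Hu) => [x|]; [by split => /e|exact: ltnW].
Qed.

Definition cutS (s : @usupport d X) : X -> Prop :=
  match s with SPt p => fun x => x < p | SLeft K => K | SRight J => fun x => ~ J x end.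
Definition kindS (s : @usupport d X) : nat :=
  match s with SPt _ => 1%N | SLeft _ => 0%N | SRight _ => 2%N end.


Lemma lexle_lt C k C' k' : (k < k')%N -> lexle C k C' k' <-> subsetX C C'.
Proof.
move=> kk; split; first by case=> [[]|[]].
move=> h; case: (classic (subsetX C' C)) => h'; [right|left] => //.
by split => //; split => //; exact: ltnW.
Qed.
Lemma lexle_eq C k C' : lexle C k C' k <-> subsetX C C'.
Proof.
split; first by case=> [[]|[]].
move=> h; case: (classic (subsetX C' C)) => h'; [right|left] => //.
Qed.
Lemma lexle_gt C k C' k' : (k' < k)%N -> lexle C k C' k' <-> subsetX C C' /\ ~ subsetX C' C.
Proof.
move=> kk; split; last by left.
case=> [//|[_ [_ h]]]; by move: (leq_trans kk h); rewrite ltnn.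
Qed.

Lemma supp_le_lex (s t : @usupport d X) : in_sX s -> in_sX t ->
  supp_le s t <-> lexle (cutS s) (kindS s) (cutS t) (kindS t).
Proof.
rewrite /supp_le; case: s => [p|K|J]; case: t => [q|K'|J'] /=.
- move=> _ _; rewrite lexle_eq; split.
    case=> [pq x xp|->] //; exact: lt_trans xp pq.
  move=> h; case: (ltgtP p q) => [pq|qp|->]; [by left|exfalso|by right].
  by move: (h q qp); rewrite ltxx.
- move=> _ [Ki [_ Km]]; rewrite lexle_gt //; split.
    case=> // Kp; split; first by move=> x xp; exact: (Ki p x (ltW xp) Kp).
    by move=> h; move: (h p Kp); rewrite ltxx.
  case=> h1 h2; left; apply: NNPP => nKp; apply: h2 => x Kx.
  by rewrite ltNge; apply/negP => px; apply: nKp; exact: (Ki x p px Kx).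
- move=> _ [Jf [_ Jm]]; rewrite lexle_lt //; split.
    case=> // nJ x xp Jx; apply: nJ; exact: (Jf x p (ltW xp) Jx).
  move=> h; left => Jp; case: (Jm p Jp) => y [Jy yp]; exact: (h y yp Jy).
- move=> [Ki _] _; rewrite lexle_lt //; split.
    case=> // nK x Kx; rewrite ltNge; apply/negP => qx; apply: nK; exact: (Ki x q qx Kx).
  by move=> h; left => Kq; move: (h q Kq); rewrite ltxx.
- move=> _ _; rewrite lexle_eq; split.
    by case=> [[]|e] // x /e.
  move=> h; case: (classic (subsetX K' K)) => h'; [right|left] => //.
  by move=> x; split; [apply: h|apply: h'].
- move=> _ _; rewrite lexle_lt //; split.
    by case=> // h x Kx Jx; apply: (h x).
  by move=> h; left => x [Kx Jx]; exact: (h x Kx Jx).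
- move=> [Jf [_ Jm]] _; rewrite lexle_gt //; split.
    case=> // Jq; split.
      move=> x nJ; rewrite ltNge; apply/negP => qx; apply: nJ; exact: (Jf q x qx Jq).
    move=> h; case: (Jm q Jq) => y [Jy yq]; exact: (h y yq Jy).
  case=> h1 h2; left; apply: NNPP => nJq; apply: h2 => x xq Jx.
  by apply: nJq; exact: (Jf x q (ltW xq) Jx).
- move=> [Jf _] [Ki _]; rewrite lexle_gt //; split.
    case=> // -[x [Kx Jx]]; split.
      move=> y nJy; apply: NNPP => nKy; case: (leP x y) => [xy|yx].
        by apply: nJy; exact: (Jf x y xy Jx).
      by apply: nKy; exact: (Ki x y (ltW yx) Kx).
    by move=> h; exact: (h x Kx Jx).
  case=> h1 h2; left; apply: NNPP => n; apply: h2 => x Kx Jx; apply: n; by exists x.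
- move=> _ _; rewrite lexle_eq; split.
    case=> [[h _]|e] x nJ J'x; apply: nJ; [exact: h | exact: (proj2 (e x) J'x)].
  move=> h; case: (classic (subsetX J J')) => h'.
    right => x; split; first exact: h'.
    by move=> J'x; apply: NNPP => nJ; exact: (h x nJ J'x).
  left; split; last by [].
  by move=> x J'x; apply: NNPP => nJ; exact: (h x nJ J'x).
Qed.

Lemma supp_eq_code (s t : @usupport d X) :
  supp_eq s t <-> seteq (cutS s) (cutS t) /\ kindS s = kindS t.
Proof.
case: s => [p|K|J]; case: t => [q|K'|J'] /=; split; try (by case); try (by move=> []).
- move=> ->; by split.
- case=> e _; case: (ltgtP p q) => // [pq|qp]; exfalso.
    by move: (proj2 (e p) pq); rewrite ltxx.
  by move: (proj1 (e q) qp); rewrite ltxx.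
- by move=> e; split.
- by move=> e; split => // x; split => nJ h; apply: nJ; apply/e.
- case=> e _ x; split => h; apply: NNPP => nh.
    exact: (proj2 (e x) nh h).
  exact: (proj1 (e x) nh h).
Qed.
Section Supp.
Variable u : (X -> Prop) -> Prop.
Hypothesis Hu : is_ultrafilter u.

Lemma Iu_init : initial_seg (Iu u).
Proof. by move=> x y yx h K hK uK; apply: (hK x y yx); apply: h. Qed.
Lemma Ju_final : final_seg (Ju u).
Proof. by move=> x y yx h K hK uK; apply: (hK x y yx); apply: h. Qed.

Lemma Iu_ge x : Iu u x -> u (fun y => x <= y).
Proof.
move=> h; apply: NNPP => n.
have hK : initial_seg (fun y => ~ x <= y).
  by move=> a b ba na xb; apply: na; exact: le_trans xb ba.
exact: (h _ hK (uneg Hu n) (lexx x)).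
Qed.
Lemma Ju_le x : Ju u x -> u (fun y => y <= x).
Proof.
move=> h; apply: NNPP => n.
have hK : final_seg (fun y => ~ y <= x).
  by move=> a b ab na bx; apply: na; exact: le_trans ab bx.
exact: (h _ hK (uneg Hu n) (lexx x)).
Qed.

Lemma cut_Iu x : cut u x -> Iu u x.
Proof.
move=> h K hK uK; apply: NNPP => nK.
by apply: (udisj Hu uK h) => y Ky xy; apply: nK; exact: (hK y x (ltW xy) Ky).
Qed.
Lemma ncut_Ju x : ~ cut u x -> Ju u x.
Proof.
move=> h F hF uF; apply: NNPP => nF.
have h2 : u (fun y => y <= x) by refine (um Hu (uneg Hu h) _) => y; exact: nlt_le.
by apply: (udisj Hu uF h2) => y Fy yx; apply: nF; exact: (hF y x yx Fy).
Qed.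

Lemma Ju_ncut x : Ju u x -> ~ cut u x.
Proof.
move=> h c; have hF : final_seg (fun y => x < y).
  by move=> a b ab xa; exact: lt_le_trans xa ab.
by move: (h _ hF c); rewrite ltxx.
Qed.

Lemma IJ : ~ is_principal u -> u (Iu u) \/ u (Ju u).
Proof.
move=> np; case: (uC Hu (Iu u)) => h; [by left|right].
refine (um Hu h _) => z nz F hF uF; apply: NNPP => nF; apply: nz => K hK uK.
apply: NNPP => nK; apply: (udisj Hu uK uF) => y Ky Fy.
case: (leP z y) => [zy|yz]; first by apply: nK; exact: (hK y z zy Ky).
by apply: nF; exact: (hF y z (ltW yz) Fy).
Qed.

Lemma Iu_ne : u (Iu u) -> exists x, Iu u x.
Proof. move=> h; apply: NNPP => n; apply: (uF Hu); refine (um Hu h _) => x hx; apply: n; by exists x. Qed.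
Lemma Ju_ne : u (Ju u) -> exists x, Ju u x.
Proof. move=> h; apply: NNPP => n; apply: (uF Hu); refine (um Hu h _) => x hx; apply: n; by exists x. Qed.

Lemma Iu_cut : ~ is_principal u -> forall x, Iu u x -> cut u x.
Proof.
move=> np x hx; apply: NNPP => n; apply: np; apply: (upt Hu (x := x)).
have h1 : u (fun y => y <= x) by refine (um Hu (uneg Hu n) _) => y; exact: nlt_le.
refine (um Hu (uI Hu h1 (Iu_ge hx)) _) => y [a b]; apply/eqP; rewrite eq_le a b.
by [].
Qed.
Lemma Ju_cutp : ~ is_principal u -> forall x, Ju u x -> ~ cutp u x.
Proof.
move=> np x hx c; apply: np; apply: (upt Hu (x := x)).
refine (um Hu (uI Hu c (Ju_le hx)) _) => y [a b]; apply/eqP; rewrite eq_le a b.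
by [].
Qed.

Lemma Iu_nomax : ~ is_principal u -> u (Iu u) -> forall x, Iu u x -> exists y, Iu u y /\ x < y.
Proof.
move=> np IuE x hx.
apply: NNPP => n; apply: np; apply: (upt Hu (x := x)).
refine (um Hu (uI Hu (Iu_ge hx) (IuE)) _) => y [xy Iy]; apply/eqP; rewrite eq_le xy andbT.
by apply: nlt_le => xy'; apply: n; exists y.
Qed.
Lemma Ju_nomin : ~ is_principal u -> u (Ju u) -> forall x, Ju u x -> exists y, Ju u y /\ y < x.
Proof.
move=> np JuE x hx.
apply: NNPP => n; apply: np; apply: (upt Hu (x := x)).
refine (um Hu (uI Hu (Ju_le hx) (JuE)) _) => y [yx Jy]; apply/eqP; rewrite eq_le yx /=.
by apply: nlt_le => xy'; apply: n; exists y.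
Qed.

Lemma supp_exists : exists s, is_supp u s.
Proof.
case: (classic (is_principal u)) => [[x hx]|np]; first by exists (SPt x).
case: (IJ np) => h; [exists (SLeft (Iu u))|exists (SRight (Ju u))]; do 2 split => //.
Qed.

Lemma supp_in_sX s : is_supp u s -> in_sX s.
Proof.
case: s => [x|K|J] //=.
  case=> np [h e]; split; first by move=> a b ba /e /(Iu_init ba) /e.
  split; first by case: (Iu_ne h) => x /e; exists x.
  move=> x /e /(Iu_nomax np h) [y [/e ?]]; by exists y.
case=> np [h e]; split; first by move=> a b ba /e /(Ju_final ba) /e.
split; first by case: (Ju_ne h) => x /e; exists x.
move=> x /e /(Ju_nomin np h) [y [/e ?]]; by exists y.
Qed.

Lemma code_supp s : is_supp u s -> seteq (cut u) (cutS s) /\ kind u = kindS s.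
Proof.
case: s => [p|K|J] /=.
- move=> hp; split; first by move=> x; rewrite /cut hp.
  apply/kind1; split; [rewrite /cut hp /principal /= hp /principal /= ltxx // | rewrite /cutp hp /principal /= hp /principal /= lexx //].
- case=> np [h e].
  have ec : seteq (cut u) K.
    move=> x; split => [c|Kx]; first exact: (proj2 (e x) (cut_Iu c)).
    exact: (Iu_cut np (proj1 (e x) Kx)).
  split => //; apply/kind0; refine (ext Hu _ h) => x; split => [hx|hx].
    exact: Iu_cut.
  exact: cut_Iu.
- case=> np [h e].
  have ec : seteq (cut u) (fun x => ~ J x).
    move=> x; split => [c Jx|nJ]; first exact: (Ju_ncut (proj1 (e x) Jx) c).
    by apply: NNPP => nc; apply: nJ; apply: (proj2 (e x)); exact: ncut_Ju.
  split => //; apply/kind2; split.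
    move=> c; apply: (udisj Hu c h) => x cx Jx; exact: (Ju_ncut Jx cx).
  move=> c; apply: (udisj Hu c h) => x cx Jx; exact: (Ju_cutp np Jx cx).
Qed.
End Supp.

Lemma surj (s : @usupport d X) : in_sX s -> exists u, is_ultrafilter u /\ is_supp u s.
Proof.
case: s => [p|K|J] /=.
- move=> _; exists (principal p); split => //.
  split => //; split => //; split; first by move=> A B pA h; exact: h.
  split => //; move=> A; exact: classic.
- move=> [Ki [[x0 Kx0] Km]].
  pose F := fun S : X -> Prop => exists x, K x /\ forall y, K y -> x <= y -> S y.
  have [u [Hu sub]] : exists u, is_ultrafilter u /\ (forall A, F A -> u A).
    apply: get_uf.
    + by exists x0.
    + by case=> x [Kx h]; exact: (h x Kx (lexx x)).
    + by move=> A B [x [Kx h]] AB; exists x; split => // y Ky xy; apply: AB; exact: h.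
    + move=> A B [x1 [K1 h1]] [x2 [K2 h2]].
      case: (leP x1 x2) => [x12|x21].
        exists x2; split => // y Ky xy; split; [apply: h1 => //; exact: le_trans x12 xy|exact: h2].
      exists x1; split => // y Ky xy; split; [exact: h1|apply: h2 => //; exact: le_trans (ltW x21) xy].
  have uK : u K by apply: sub; exists x0; split => // y Ky _.
  have ux : forall x, K x -> u (fun y => x <= y).
    by move=> x Kx; apply: sub; exists x; split => // y _ h.
  have e : seteq K (Iu u).
    move=> x; split => [Kx K' hK' uK'|h]; last exact: (h K Ki uK).
    apply: NNPP => nK; apply: (udisj Hu uK' (ux x Kx)) => y Ky xy; apply: nK; exact: (hK' y x xy Ky).
  exists u; split => //; split; last by split => //; exact: (ext Hu e uK).
  case=> p hp; have Kp : K p by apply/(hp K).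
  case: (Km p Kp) => z [Kz pz]; have := proj1 (hp _) (ux z Kz); rewrite /principal => zp.
  by move: (lt_le_trans pz zp); rewrite ltxx.
- move=> [Jf [[x0 Jx0] Jm]].
  pose F := fun S : X -> Prop => exists x, J x /\ forall y, J y -> y <= x -> S y.
  have [u [Hu sub]] : exists u, is_ultrafilter u /\ (forall A, F A -> u A).
    apply: get_uf.
    + by exists x0.
    + by case=> x [Jx h]; exact: (h x Jx (lexx x)).
    + by move=> A B [x [Jx h]] AB; exists x; split => // y Jy xy; apply: AB; exact: h.
    + move=> A B [x1 [J1 h1]] [x2 [J2 h2]].
      case: (leP x1 x2) => [x12|x21].
        exists x1; split => // y Jy yx; split; [exact: h1|apply: h2 => //; exact: le_trans yx x12].
      exists x2; split => // y Jy yx; split; [apply: h1 => //; exact: le_trans yx (ltW x21)|exact: h2].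
  have uJ : u J by apply: sub; exists x0; split => // y Jy _.
  have ux : forall x, J x -> u (fun y => y <= x).
    by move=> x Jx; apply: sub; exists x; split => // y _ h.
  have e : seteq J (Ju u).
    move=> x; split => [Jx F' hF' uF'|h]; last exact: (h J Jf uJ).
    apply: NNPP => nF; apply: (udisj Hu uF' (ux x Jx)) => y Fy yx; apply: nF; exact: (hF' y x yx Fy).
  exists u; split => //; split; last by split => //; exact: (ext Hu e uJ).
  case=> p hp; have Jp : J p by apply/(hp J).
  case: (Jm p Jp) => z [Jz zp]; have := proj1 (hp _) (ux z Jz); rewrite /principal => pz.
  by move: (lt_le_trans zp pz); rewrite ltxx.
Qed.
End Gen.
Theorem corollary2 (d : Order.disp_t) (X : orderType d) :
  (* every ultrafilter has a usupport, lying in s(X) *)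
  (forall u : (X -> Prop) -> Prop, is_ultrafilter u ->
     exists s, is_supp u s /\ in_sX s) /\
  (* main equivalences *)
  (forall (u v : (X -> Prop) -> Prop) (su sv : usupport),
     is_ultrafilter u -> is_ultrafilter v -> is_supp u su -> is_supp v sv ->
     (trle u v <-> supp_le su sv) /\ (treq u v <-> supp_eq su sv)) /\
  (* trianglelefteq is a linear pre-order on betaX *)
  (forall u : (X -> Prop) -> Prop, is_ultrafilter u -> trle u u) /\
  (forall u v w : (X -> Prop) -> Prop, is_ultrafilter u -> is_ultrafilter v -> is_ultrafilter w ->
     trle u v -> trle v w -> trle u w) /\
  (forall u v : (X -> Prop) -> Prop, is_ultrafilter u -> is_ultrafilter v -> trle u v \/ trle v u) /\
  (* equiv is an equivalence relation on betaX *)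
  (forall u : (X -> Prop) -> Prop, is_ultrafilter u -> treq u u) /\
  (forall u v : (X -> Prop) -> Prop, is_ultrafilter u -> is_ultrafilter v -> treq u v -> treq v u) /\
  (forall u v w : (X -> Prop) -> Prop, is_ultrafilter u -> is_ultrafilter v -> is_ultrafilter w ->
     treq u v -> treq v w -> treq u w) /\
  (* [u] |-> supp(u) is onto s(X) (with the equivalences above: an order isomorphism
     of betaX/equiv onto s(X)) *)
  (forall s : usupport, in_sX s ->
     exists u : (X -> Prop) -> Prop, is_ultrafilter u /\ is_supp u s).
Proof.
have main : forall (u v : (X -> Prop) -> Prop) (su sv : usupport),
     is_ultrafilter u -> is_ultrafilter v -> is_supp u su -> is_supp v sv ->
     (trle u v <-> supp_le su sv).
  move=> u v su sv Hu Hv hs ht.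
  have [eu ku] := code_supp Hu hs; have [ev kv] := code_supp Hv ht.
  rewrite (trle_lex Hu Hv) ku kv (lexle_ext _ _ eu ev).
  by rewrite supp_le_lex //; [exact: (supp_in_sX Hu hs)|exact: (supp_in_sX Hv ht)].
have trans : forall u v w : (X -> Prop) -> Prop, is_ultrafilter u -> is_ultrafilter v -> is_ultrafilter w ->
     trle u v -> trle v w -> trle u w.
  move=> u v w Hu Hv Hw /(trle_lex Hu Hv) h1 /(trle_lex Hv Hw) h2.
  apply/(trle_lex Hu Hw); exact: lexle_trans h1 h2.
have refl : forall u : (X -> Prop) -> Prop, is_ultrafilter u -> trle u u.
  by move=> u Hu; apply/(trle_lex Hu Hu); exact: lexle_refl.
split.
  move=> u Hu; have [s hs] := supp_exists Hu; exists s; split => //; exact: (supp_in_sX Hu hs).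
split.
  move=> u v su sv Hu Hv hs ht; split; first exact: main.
  rewrite /treq (main _ _ _ _ Hu Hv hs ht) (main _ _ _ _ Hv Hu ht hs).
  have iS := supp_in_sX Hu hs; have iT := supp_in_sX Hv ht.
  rewrite (supp_le_lex iS iT) (supp_le_lex iT iS) lexle_anti.
  by rewrite supp_eq_code.
split; first exact: refl.
split; first exact: trans.
split; first exact: trle_total.
split; first by move=> u Hu; split; apply: refl.
split; first by move=> u v _ _ [].
split; first by move=> u v w Hu Hv Hw [h1 h2] [h3 h4]; split; [exact: (trans u v w)|exact: (trans w v u)].
exact: surj.
Qed.
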